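(* Let $N\ge 1$ be an integer and let $M$ be the set of pairs produced by the born-free matching algorithm for $N$. Then $M$ is a matching of the graph $G_N$ and $G_N$ contains no flat alternating cycle with respect to $M$.
   Context: For a positive integer $N$, let $G_N$ be the graph with vertex set $\{1,\dots,N\}$ in which $x$ and $y$ are adjacent iff $y=px$ or $x=py$ for some prime $p$. The rank of $n$ is $\Omega(n)$, the number of prime factors of $n$ counted with multiplicity. A matching is a set of edges no two sharing an endpoint. A cycle is alternating (with respect to a matching) if exactly every other edge of the cycle lies in the matching; it is flat if for some integer $k$ all its vertices have rank $k$ or $k+1$. For a prime $p$, let $S_p=\{(x,px): x\in\mathbb{N},\ px\le N\}$. The born-free matching algorithm for $N$: start with $M=\emptyset$; run through the primes $p\le N$ in descending order; for each such $p$, run through the pairs $(x,px)\in S_p$ in descending order of $x$, and add $(x,px)$ to $M$ whenever neither $x$ nor $px$ is an endpoint of a pair already in $M$. *)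

(* Defs.v *)
From mathcomp Require Import all_boot.
Set Implicit Arguments. Unset Strict Implicit. Unset Printing Implicit Defensive.

(* Omega n: number of prime factors of n counted with multiplicity (the rank). *)
Definition bigOmega (n : nat) : nat := \sum_(p <- primes n) logn p n.

Definition adj (N x y : nat) : Prop :=
  [/\ 1 <= x <= N, 1 <= y <= N &
      exists p, prime p /\ (y = p * x \/ x = p * y)].

Definition endpoint (M : seq (nat * nat)) (v : nat) : bool :=
  has (fun e => (e.1 == v) || (e.2 == v)) M.

Definition bf_step (p : nat) (M : seq (nat * nat)) (x : nat) : seq (nat * nat) :=
  if ~~ endpoint M x && ~~ endpoint M (p * x) then rcons M (x, p * x) else M.

Definition primes_desc (N : nat) : seq nat := [seq p <- rev (iota 1 N) | prime p].

(* S_p in descending order of x: x = N %/ p, ..., 1 (i.e. x >= 1, p x <= N) *)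
Definition Sp_desc (N p : nat) : seq nat := rev (iota 1 (N %/ p)).

Definition born_free (N : nat) : seq (nat * nat) :=
  foldl (fun M p => foldl (bf_step p) M (Sp_desc N p)) [::] (primes_desc N).

Definition is_matching (N : nat) (M : seq (nat * nat)) : Prop :=
  (forall e, e \in M -> adj N e.1 e.2) /\
  (forall e f, e \in M -> f \in M -> e != f ->
     [&& e.1 != f.1, e.1 != f.2, e.2 != f.1 & e.2 != f.2]).

Definition edge_in (M : seq (nat * nat)) (a b : nat) : bool :=
  ((a, b) \in M) || ((b, a) \in M).

Definition is_cycle (N : nat) (c : seq nat) : Prop :=
  3 <= size c /\ uniq c /\
  forall i, i < size c -> adj N (nth 0 c i) (nth 0 c (i.+1 %% size c)).

Definition cyc_edge_in (M : seq (nat * nat)) (c : seq nat) (i : nat) : bool :=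
  edge_in M (nth 0 c (i %% size c)) (nth 0 c (i.+1 %% size c)).

Definition alternating (M : seq (nat * nat)) (c : seq nat) : Prop :=
  forall i, i < size c -> cyc_edge_in M c i != cyc_edge_in M c i.+1.

Definition flat (c : seq nat) : Prop :=
  exists k, forall v, v \in c -> bigOmega v = k \/ bigOmega v = k.+1.

(* Main.v *)
Require Import Defs.
From mathcomp Require Import all_boot.
From mathcomp Require Import zify.

Definition stp (M : seq (nat*nat)) (z : nat*nat) := bf_step z.1 M z.2.
Definition Fp N p := [seq (p, x) | x <- Sp_desc N p].
Definition Lst N := flatten [seq Fp N p | p <- primes_desc N].

Lemma born_free_L N : born_free N = foldl stp [::] (Lst N).
Proof.
rewrite /born_free /Lst; elim: (primes_desc N) [::] => [|p s IH] M //=.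
rewrite foldl_cat IH /Fp; congr foldl.
by elim: (Sp_desc N p) M => //= x xs IHx M; rewrite IHx.
Qed.

Lemma memL N z : (z \in Lst N) = [&& prime z.1, 0 < z.2 & z.1 * z.2 <= N].
Proof.
case: z => p x /=.
apply/flatten_mapP/idP.
- case=> q; rewrite /primes_desc mem_filter mem_rev mem_iota => /andP[pq /andP[q1 qN]].
  case/mapP=> y; rewrite /Sp_desc mem_rev mem_iota => /andP[y1 yN] [-> ->].
  rewrite pq y1 /=; have q0 : 0 < q by apply: prime_gt0.
  rewrite add1n ltnS leq_divRL // in yN; by rewrite mulnC.
- case/and3P=> pp x0 pxN; exists p.
  + rewrite /primes_desc mem_filter mem_rev mem_iota pp prime_gt0 //= add1n ltnS.
    by apply: leq_trans pxN; rewrite leq_pmulr.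
  + apply/mapP; exists x => //; rewrite /Sp_desc mem_rev mem_iota x0 add1n ltnS.
    by rewrite leq_divRL ?prime_gt0 // mulnC.
Qed.

Definition rel1 (a b : nat*nat) := b.1 <= a.1.

Lemma pairwiseL N : pairwise rel1 (Lst N).
Proof.
have hp : pairwise (fun a b => b <= a) (primes_desc N).
  apply: pairwise_filter; rewrite -sorted_pairwise; last first.
    by move=> a b c /= h1 h2; apply: leq_trans h2 h1.
  by rewrite rev_sorted iota_sorted.
rewrite /Lst; elim: (primes_desc N) hp => [|p s IH] //=.
move=> /andP[hall hs].
rewrite pairwise_cat IH // andbT; apply/andP; split.
- apply/allrelP => a b /mapP[x _ ->] /flatten_mapP[q qs /mapP[y _ ->]].
  by rewrite /rel1 /=; move/allP: hall => /(_ q qs).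
- rewrite /Fp pairwise_map; elim: (Sp_desc N p) => //= x xs ->.
  by rewrite andbT; apply/allP => y _; rewrite /relpre /rel1 /=.
Qed.

Definition disj (M : seq (nat*nat)) := forall e f, e \in M -> f \in M -> e != f ->
     [&& e.1 != f.1, e.1 != f.2, e.2 != f.1 & e.2 != f.2].

Lemma disj_stp M z : disj M -> disj (stp M z).
Proof.
rewrite /stp /bf_step; case: ifP => // /andP[h1 h2] dM.
have key : forall f, f \in M -> [&& z.2 != f.1, z.2 != f.2, z.1 * z.2 != f.1 & z.1*z.2 != f.2].
  move=> f fM; apply/and4P; split; apply/negP=> /eqP E.
  - by move/negP: h1; apply; apply/hasP; exists f => //; rewrite E eqxx.
  - by move/negP: h1; apply; apply/hasP; exists f => //; rewrite E eqxx orbT.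
  - by move/negP: h2; apply; apply/hasP; exists f => //; rewrite E eqxx.
  - by move/negP: h2; apply; apply/hasP; exists f => //; rewrite E eqxx orbT.
move=> e f; rewrite !mem_rcons !inE => /orP[/eqP->|eM] /orP[/eqP->|fM] ne.
- by rewrite eqxx in ne.
- by apply: key.
- by have /and4P[a b c d] := key e eM; rewrite !(eq_sym e.1) !(eq_sym e.2) a b c d.
- by apply: dM.
Qed.

Lemma disj_fold L M : disj M -> disj (foldl stp M L).
Proof. by elim: L M => //= z L IH M dM; apply: IH; apply: disj_stp. Qed.

Definition memv (w : nat*nat) v := (v == w.2) || (v == w.1 * w.2).

Lemma gen (L : seq (nat*nat)) : pairwise rel1 L ->
 (forall e, e \in foldl stp [::] L -> exists2 z, z \in L & e = (z.2, z.1 * z.2)) /\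
 (forall z, z \in L -> exists2 w, w \in L &
    [/\ (w.2, w.1*w.2) \in foldl stp [::] L, z.1 <= w.1 &
        memv w z.2 || memv w (z.1*z.2)]).
Proof.
elim/last_ind: L => [|L z IH]; first by split=> ? .
rewrite -cats1 pairwise_cat allrel1r andbT => /andP[/allP hall /IH[IHa IHb]].
rewrite foldl_cat /=; set M := foldl stp [::] L.
have sub : forall e, e \in M -> e \in stp M z.
  by move=> e eM; rewrite /stp /bf_step; case: ifP => // _; rewrite mem_rcons inE eM orbT.
split.
- move=> e; rewrite /stp /bf_step; case: ifP => _.
    rewrite mem_rcons inE => /orP[/eqP->|/IHa[w wL ->]].
      by exists z => //; rewrite mem_cat inE eqxx orbT.
    by exists w => //; rewrite mem_cat wL.
  by move/IHa=> [w wL ->]; exists w => //; rewrite mem_cat wL.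
- move=> z'; rewrite mem_cat inE => /orP[/IHb[w wL [h1 h2 h3]]|/eqP->].
    by exists w; rewrite ?mem_cat ?wL //; split => //; apply: sub.
  case E: (~~ endpoint M z.2 && ~~ endpoint M (z.1 * z.2)).
    exists z; first by rewrite mem_cat inE eqxx orbT.
    split => //; first by rewrite /stp /bf_step E mem_rcons inE eqxx.
    by rewrite /memv eqxx.
  have [v [vz /hasP[e eM he]]] : exists v, ((v == z.2) || (v == z.1 * z.2)) /\ endpoint M v.
    move/negbT: E; rewrite negb_and !negbK => /orP[h|h].
      by exists z.2; rewrite eqxx.
    by exists (z.1 * z.2); rewrite eqxx orbT.
  have [w wL ew] := IHa e eM.
  exists w; first by rewrite mem_cat wL.
  split; first by rewrite -ew; apply: sub.
    exact: (hall w wL).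
  rewrite ew /= in he.
  by case/orP: vz => /eqP vz; subst v; rewrite /memv; case/orP: he => /eqP->; rewrite eqxx ?orbT.
Qed.

Lemma matching_part N : is_matching N (born_free N).
Proof.
split; last first.
  by rewrite born_free_L; apply: disj_fold => e f.
move=> e; rewrite born_free_L => /(proj1 (@gen _ (pairwiseL N)))[z].
rewrite memL => /and3P[pp x0 pxN] -> /=.
have p1 := prime_gt1 pp.
split.
- by rewrite x0 /=; apply: leq_trans pxN; rewrite leq_pmull // ltnW.
- by rewrite muln_gt0 x0 prime_gt0.
- by exists z.1; split => //; left.
Qed.

Lemma bigOmegaE n B : 0 < n -> n < B -> bigOmega n = \sum_(q <- iota 0 B) logn q n.
Proof.
move=> n0 nB.
rewrite (bigID (fun q => q \in primes n)) /= [X in _ + X]big1 ?addn0; last first.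
  by move=> q /negbTE h; apply/eqP; rewrite -leqn0 leqNgt logn_gt0 h.
rewrite -big_filter /bigOmega; apply: perm_big.
apply: uniq_perm; rewrite ?primes_uniq ?filter_uniq ?iota_uniq //.
move=> q; rewrite mem_filter mem_iota add0n /=.
case qp: (q \in primes n) => //=; symmetry; apply: leq_ltn_trans nB.
by move: qp; rewrite mem_primes => /and3P[_ _ /dvdn_leq]; apply.
Qed.

Lemma bigOmegaM p x : prime p -> 0 < x -> bigOmega (p * x) = (bigOmega x).+1.
Proof.
move=> pp x0; have p0 := prime_gt0 pp.
have px : x <= p * x by rewrite leq_pmull.
rewrite (@bigOmegaE _ (p * x).+1) ?muln_gt0 ?p0 // (@bigOmegaE x (p * x).+1) //.
rewrite (eq_bigr (fun q => (q == p) + logn q x)); last first.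
  by move=> q _; rewrite lognM // logn_prime.
have pin : p \in iota 0 (p * x).+1 by rewrite mem_iota add0n ltnS leq_pmulr.
have u := iota_uniq 0 (p * x).+1.
move: pin u; move: (iota 0 (p * x).+1) => r pin u.
rewrite big_split /= -add1n; congr (_ + _).
rewrite (bigD1_seq p) //= eqxx big1 //.
by move=> q /negbTE ->.
Qed.

Lemma mono_up (h : nat -> nat) : (forall j, h j <= h j.+1) -> forall i d, h i <= h (i + d).
Proof. move=> H i; elim=> [|d IH]; rewrite ?addn0 // addnS; exact: leq_trans IH (H _). Qed.

Lemma mono_dn (h : nat -> nat) : (forall j, h j.+1 <= h j) -> forall i d, h (i + d) <= h i.
Proof. move=> H i; elim=> [|d IH]; rewrite ?addn0 // addnS; exact: leq_trans (H _) IH. Qed.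

Lemma edge_in_sym M a b : edge_in M a b = edge_in M b a.
Proof. by rewrite /edge_in orbC. Qed.

Lemma no_cycle N c : is_cycle N c -> alternating (born_free N) c -> flat c -> False.
Proof.
move=> [n3 [uc hadj]] halt [k hk].
have dM : disj (born_free N) by rewrite born_free_L; apply: disj_fold => e f.
have genb := proj2 (@gen _ (pairwiseL N)); rewrite -born_free_L in genb.
move: (born_free N) dM genb halt => M dM genb halt.
have n0 : 0 < size c by apply: leq_trans n3.
pose g j := nth 0 c (j %% (size c)).
have modSS : forall a b, a %% (size c) = b %% (size c) -> a.+1 %% (size c) = b.+1 %% (size c).
  by move=> a b E; rewrite -[a.+1]addn1 -[b.+1]addn1 -modnDml E modnDml.
have modS : forall j, (j %% (size c)).+1 %% (size c) = j.+1 %% (size c) by move=> j; apply: modSS; rewrite modn_mod.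
have gS : forall j, g (j %% (size c)).+1 = g j.+1 by move=> j; rewrite /g modS.
have gmod : forall j, g (j %% (size c)) = g j by move=> j; rewrite /g modn_mod.
have gin : forall j, g j \in c by move=> j; apply: mem_nth; rewrite ltn_pmod.
have gadj : forall j, adj N (g j) (g j.+1).
  move=> j; have := hadj (j %% (size c)) (ltn_pmod _ n0); rewrite (modS j) => H; exact: H.
pose Mb j := cyc_edge_in M c j.
have MbE : forall j, Mb j = edge_in M (g j) (g j.+1) by [].
have Mbm : forall a b, a %% (size c) = b %% (size c) -> Mb a = Mb b.
  by move=> a b E; rewrite !MbE /g E (modSS _ _ E).
have halt' : forall j, Mb j.+1 = ~~ Mb j.
  move=> j; have := halt (j %% (size c)) (ltn_pmod _ n0).
  rewrite -/(Mb _) -/(Mb _) (Mbm (j %% (size c)) j (modn_mod _ _)).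
  rewrite (Mbm _ j.+1 (modS j)).
  by case: (Mb j); case: (Mb j.+1).
pose low v := bigOmega v == k.
have lowE : forall a r, a \in c -> r * a \in c -> prime r -> 0 < a -> low a && ~~ low (r * a).
  move=> a r ac bc pr a0; move: (hk _ ac) (hk _ bc); rewrite /low bigOmegaM //.
  move: (bigOmega a) => o; case=> ->; case; lia.
have gpos : forall j, 0 < g j by move=> j; case: (gadj j) => /andP[h _] _ _.
pose rp j := maxn (g j) (g j.+1) %/ minn (g j) (g j.+1).
have einfo : forall j, prime (rp j) /\
    ((low (g j) /\ g j.+1 = rp j * g j) \/ (~~ low (g j) /\ g j = rp j * g j.+1)).
  move=> j; case: (gadj j) => _ _ [r [pr [E|E]]].
  - have a0 := gpos j.
    have le : g j <= r * g j by rewrite leq_pmull ?prime_gt0.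
    have -> : rp j = r by rewrite /rp E (maxn_idPr le) (minn_idPl le) mulnK.
    split => //; left; split => //.
    have bc := gin j.+1; rewrite E in bc.
    by case/andP: (lowE _ _ (gin j) bc pr a0).
  - have a0 := gpos j.+1.
    have le : g j.+1 <= r * g j.+1 by rewrite leq_pmull ?prime_gt0.
    have -> : rp j = r by rewrite /rp E (maxn_idPl le) (minn_idPr le) mulnK.
    split => //; right; split => //.
    have bc := gin j; rewrite E in bc.
    by case/andP: (lowE _ _ (gin j.+1) bc pr a0) => _; rewrite E.
have lowS : forall j, low (g j.+1) = ~~ low (g j).
  move=> j; have [pr [[l E]|[l E]]] := einfo j.
  - have bc := gin j.+1; rewrite E in bc; rewrite l E.
    by case/andP: (lowE (g j) (rp j) (gin j) bc pr (gpos j)) => _ /negbTE.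
  - have bc := gin j; rewrite E in bc; rewrite (negbTE l) /=.
    by case/andP: (lowE (g j.+1) (rp j) (gin j.+1) bc pr (gpos j.+1)).
have rpm : forall j, rp (j %% size c) = rp j by move=> j; rewrite /rp gmod gS.
pose P := \max_(i < size c) rp i.
have rpP : forall j, rp j <= P.
  move=> j; rewrite -rpm; exact: (@leq_bigmax _ (fun i : 'I_(size c) => rp i) (Ordinal (ltn_pmod j n0))).
have cI : 0 < #|'I_(size c)| by rewrite card_ord.
have [i0 Pi0] := @eq_bigmax _ (fun i : 'I_(size c) => rp i) cI.
rewrite -/P /= in Pi0.
have Ckey : forall j, Mb j = false -> rp j < P.
  move=> j Mj; have [pr Ed] := einfo j; set q := rp j in pr Ed *.
  have [y [[Ey ylow yc qyc y0] [yv qyv]]] : exists y, [/\ Mb j = edge_in M y (q * y), low y,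
      y \in c, q * y \in c & 0 < y] /\ ((y == g j) || (y == g j.+1)) /\
      ((q * y == g j) || (q * y == g j.+1)).
    case: Ed => [[l E]|[l E]].
    - exists (g j); rewrite -E MbE l !eqxx ?orbT; split => //; split => //; exact: gin.
    - exists (g j.+1); rewrite -E MbE edge_in_sym !eqxx ?orbT; split => //; split => //; try exact: gin.
      by rewrite lowS.
  have qyN : q * y <= N.
    case: (gadj j) => /andP[_ h1] /andP[_ h2] _.
    by case/orP: qyv => /eqP->.
  have yL : (q, y) \in Lst N by rewrite memL /= pr y0 qyN.
  have [w wL [wM qw hm]] := genb _ yL; rewrite /= in qw hm.
  move: wL; rewrite memL => /and3P[pw x0 _].
  have [v [vy vw]] : exists v, ((v == y) || (v == q * y)) /\ memv w v.
    by case/orP: hm => h; [exists y | exists (q * y)]; rewrite eqxx ?orbT.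
  have vg : (v == g j) || (v == g j.+1).
    by case/orP: vy => /eqP->.
  have [j' [Mj' vj']] : exists j', Mb j' /\ ((v == g j') || (v == g j'.+1)).
    case/orP: vg => vg.
    - exists (j + (size c).-1).
      have e1 : (j + (size c).-1).+1 = j + size c by rewrite -addnS prednK.
      have Mjn : Mb (j + size c) = Mb j by apply: Mbm; rewrite modnDr.
      split.
        by have := halt' (j + (size c).-1); rewrite e1 Mjn Mj; case: (Mb _).
      by rewrite e1 /g modnDr -/(g j) vg orbT.
    - by exists j.+1; rewrite halt' Mj vg.
  have ef : ((w.2, w.1 * w.2) == (g j', g j'.+1)) || ((w.2, w.1 * w.2) == (g j'.+1, g j')).
    move: Mj'; rewrite MbE /edge_in => /orP[fM|fM].
    - apply/orP; left; apply/negPn/negP => ne.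
      have := dM _ _ wM fM ne; rewrite /=.
      by case/orP: vw => /eqP <-; case/orP: vj' => /eqP <-; rewrite eqxx ?andbF.
    - apply/orP; right; apply/negPn/negP => ne.
      have := dM _ _ wM fM ne; rewrite /=.
      by case/orP: vw => /eqP <-; case/orP: vj' => /eqP <-; rewrite eqxx ?andbF.
  have le : w.2 <= w.1 * w.2 by rewrite leq_pmull ?prime_gt0.
  have [xc pxc rpw] : [/\ w.2 \in c, w.1 * w.2 \in c & rp j' = w.1].
    case/orP: ef => /eqP [E1 E2].
    - by rewrite E2 E1 gin; split => //; rewrite /rp -E1 -E2 (maxn_idPr le) (minn_idPl le) mulnK.
    - rewrite E2 E1 gin; split => //.
      by rewrite /rp -E1 -E2 (maxn_idPl le) (minn_idPr le) mulnK.
  have pP : w.1 <= P by rewrite -rpw rpP.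
  rewrite leq_eqVlt in qw; case/orP: qw => [/eqP qp|]; last by move=> h; apply: leq_trans h pP.
  exfalso.
  have /andP[xl pxl] := lowE _ _ xc pxc pw x0.
  have q0 : 0 < q by rewrite prime_gt0.
  have yx : y = w.2.
    case/orP: vy => /eqP vE; subst v; case/orP: vw => /eqP E.
    - by [].
    - by move: pxl; rewrite -E ylow.
    - have qyl : ~~ low (q * y).
        by case/andP: (lowE _ _ yc qyc pr y0).
      by rewrite E xl in qyl.
    - by apply/eqP; rewrite -(eqn_pmul2l q0) E qp.
  have : Mb j by rewrite Ey yx qp /edge_in wM.
  by rewrite Mj.
have Pp : prime P by rewrite Pi0; case: (einfo i0).
have Mi0 : Mb i0 by apply/negPn/negP => /negbTE /Ckey; rewrite -Pi0 ltnn.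
have u : forall j, (low (g j) == Mb j) = (low (g 0) == Mb 0).
  by elim=> // j IH; rewrite lowS halt' -IH; case: (low _); case: (Mb j).
pose f j := logn P (g j).
have fn : f (size c) = f 0 by rewrite /f /g modnn mod0n.
have rest0 : forall j, Mb j = false -> logn P (rp j) = 0.
  move=> j /Ckey h; have [pr _] := einfo j; rewrite logn_prime //.
  by rewrite gtn_eqF.
have i0n : i0 < size c by [].
have e0 : i0.+1 + (size c - i0.+1) = size c by rewrite subnKC.
case hu: (low (g 0) == Mb 0).
- have lj : forall j, low (g j) = Mb j by move=> j; have := u j; rewrite hu => /eqP.
  have incr : forall j, f j <= f j.+1.
    move=> j; have [pr [[l E]|[l E]]] := einfo j.
    + by rewrite /f E lognM ?gpos ?prime_gt0 // leq_addl.
    + have Mj : Mb j = false by rewrite -lj (negbTE l).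
      by rewrite /f E lognM ?gpos ?prime_gt0 // rest0.
  have strict : f i0 < f i0.+1.
    have [pr [[l E]|[l E]]] := einfo i0.
    + by rewrite /f E lognM ?gpos ?prime_gt0 // -Pi0 (logn_prime P Pp) eqxx.
    + by rewrite lj Mi0 in l.
  have h1 := @mono_up f incr 0 i0; have h2 := @mono_up f incr i0.+1 (size c - i0.+1).
  rewrite e0 fn add0n in h1 h2.
  by have := leq_ltn_trans h1 (leq_trans strict h2); rewrite ltnn.
- have lj : forall j, low (g j) = ~~ Mb j.
    by move=> j; have := u j; rewrite hu; case: (low _); case: (Mb j).
  have decr : forall j, f j.+1 <= f j.
    move=> j; have [pr [[l E]|[l E]]] := einfo j.
    + have Mj : Mb j = false by move: l; rewrite lj; case: (Mb j).
      by rewrite /f E lognM ?gpos ?prime_gt0 // rest0.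
    + by rewrite /f E lognM ?gpos ?prime_gt0 // leq_addl.
  have strict : f i0.+1 < f i0.
    have [pr [[l E]|[l E]]] := einfo i0.
    + by rewrite lj Mi0 in l.
    + by rewrite /f E lognM ?gpos ?prime_gt0 // -Pi0 (logn_prime P Pp) eqxx.
  have h1 := @mono_dn f decr 0 i0; have h2 := @mono_dn f decr i0.+1 (size c - i0.+1).
  rewrite e0 fn add0n in h1 h2.
  by have := leq_ltn_trans h2 (leq_trans strict h1); rewrite ltnn.
Qed.

Theorem theorem3 (N : nat) : 1 <= N ->
  is_matching N (born_free N) /\
  ~ (exists c : seq nat,
        is_cycle N c /\ alternating (born_free N) c /\ flat c).
Proof.
move=> _; split; first exact: matching_part.
by case=> c [h1 [h2 h3]]; exact: (@no_cycle N c h1 h2 h3).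
Qed.
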